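(* Let $\mu\in\frac12\mathbb Z$ and set $m=\omega^{N\mu}$ (so $m=\pm1$). Let $\chi=(a,b,m)$ be a character with $\operatorname{tr}\psi(\chi)=2m$, and note that $\psi(\chi)$ is diagonal if and only if it is diagonalizable. (i) If $\psi(\chi)$ is not diagonalizable, then $V(\chi,\mu)$ is a simple $N$-dimensional $\mathcal U_\xi$-module. (ii) If $\psi(\chi)=mI_2$ and $2\mu\equiv -1\pmod N$, then $V(\chi,\mu)$ is a simple projective $N$-dimensional $\mathcal U_\xi$-module; in particular this holds for the character with $a=m=-1$, $b=1$ and $\mu=-1/2$. (iii) If $\psi(\chi)=mI_2$ and $2\mu\equiv k\pmod N$ for some $k\in\{1,\dots,N-2\}$, then $V(\chi,\mu)$ is a reducible, indecomposable $\mathcal U_\xi$-module which is an extension involving a $(k+1)$-dimensional simple $\mathcal U_\xi$-submodule, and every $\mathcal U_\xi$-endomorphism of $V(\chi,\mu)$ is a scalar multiple of the identity.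
   Context: $N\ge2$, $\xi=e^{\pi i/N}$, $\omega=\xi^2=e^{2\pi i/N}$, and $\omega^x:=e^{2\pi ix/N}$ for $x\in\mathbb C$. $\mathcal U_\xi$ is generated by $K^{\pm1},E,F$ with $KE=\xi^2EK$, $KF=\xi^{-2}FK$, $[E,F]=(\xi-\xi^{-1})(K-K^{-1})$. For $\alpha,\beta,\mu\in\mathbb C$, $V(\alpha,\beta,\mu)=\mathbb C^N$ with basis $v_n$ ($n\in\mathbb Z/N\mathbb Z$) and operators $x v_n=\omega^{\alpha-n}v_n$, $y v_n=\omega^\beta v_{n-1}$, $z v_n=\omega^\mu v_n$; it is a $\mathcal U_\xi$-module via $K\mapsto x$, $E\mapsto \xi y(z-x)$, $F\mapsto y^{-1}(1-z^{-1}x^{-1})$. A character $\chi=(a,b,m)\in(\mathbb C^\times)^3$ (values of $x^N,y^N,z^N$), and $V(\chi,\mu)$ denotes $V(\alpha,\beta,\mu)$ for any $\alpha,\beta$ with $\omega^{N\alpha}=a$, $\omega^{N\beta}=b$, where $\mu$ satisfies $\omega^{N\mu}=m$ (its isomorphism class depends only on $a,b,\omega^\mu$). Set $\psi(\chi)=\begin{pmatrix} a & -b(a-m)\\ b^{-1}(a-m^{-1}) & m+m^{-1}-a\end{pmatrix}\in SL_2(\mathbb C)$. *)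

(* Defs.v *)
From HB Require Import structures.
From mathcomp Require Import all_boot all_order all_algebra.
From mathcomp Require Import complex.
From mathcomp Require Import reals trigo.
Set Implicit Arguments. Unset Strict Implicit. Unset Printing Implicit Defensive.
Import Order.TTheory GRing.Theory Num.Theory.
Local Open Scope ring_scope.

Section Defs.
Variable R : realType.
Local Notation C := (complex R).

Definition qxi (N : nat) : C := Complex (cos (pi / N%:R)) (sin (pi / N%:R)).

(* Finite-dimensional U_xi-modules, in ROW-VECTOR convention:          *)
(* the generator g acts on C^d by v |-> v *m Mg.  Hence the operator   *)
(* g1 g2 (first g2, then g1) has matrix Mg2 *m Mg1.                    *)
Definition is_Umod (xi : C) d (K Ki E F : 'M[C]_d) : Prop :=
  [/\ K *m Ki = 1%:M, Ki *m K = 1%:M,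
      E *m K = xi ^+ 2 *: (K *m E),
      F *m K = xi ^- 2 *: (K *m F) &
      F *m E - E *m F = (xi - xi^-1) *: (K - Ki)].

Record Umod (xi : C) := MkUmod {
  udim : nat;
  uK : 'M[C]_udim; uKi : 'M[C]_udim; uE : 'M[C]_udim; uF : 'M[C]_udim;
  uax : is_Umod xi uK uKi uE uF }.

Definition Ustable d (K Ki E F : 'M[C]_d) m (W : 'M[C]_(m, d)) : Prop :=
  [/\ stablemx W K, stablemx W Ki, stablemx W E & stablemx W F].

Definition Usimple d (K Ki E F : 'M[C]_d) : Prop :=
  (0 < d)%N /\ forall W : 'M[C]_d, Ustable K Ki E F W -> W == 0 \/ (W == 1%:M)%MS.

Definition Usimple_sub d (K Ki E F : 'M[C]_d) (W : 'M[C]_d) : Prop :=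
  [/\ Ustable K Ki E F W, W != 0 &
      forall W' : 'M[C]_d, Ustable K Ki E F W' -> (W' <= W)%MS ->
        W' == 0 \/ (W' == W)%MS].

Definition Ureducible d (K Ki E F : 'M[C]_d) : Prop :=
  exists W : 'M[C]_d, [/\ Ustable K Ki E F W, W != 0 & ~~ (W == 1%:M)%MS].

Definition Uindecomposable d (K Ki E F : 'M[C]_d) : Prop :=
  (0 < d)%N /\
  forall W1 W2 : 'M[C]_d, Ustable K Ki E F W1 -> Ustable K Ki E F W2 ->
    mxdirect (W1 + W2) -> (W1 + W2 == 1%:M)%MS -> W1 == 0 \/ W2 == 0.

Definition Uendo d (K Ki E F : 'M[C]_d) (T : 'M[C]_d) : Prop :=
  [/\ K *m T = T *m K, Ki *m T = T *m Ki, E *m T = T *m E & F *m T = T *m F].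

Definition Uhom xi (M M' : Umod xi) (f : 'M[C]_(udim M, udim M')) : Prop :=
  [/\ uK M *m f = f *m uK M', uKi M *m f = f *m uKi M',
      uE M *m f = f *m uE M' & uF M *m f = f *m uF M'].

(* M lies in the category of (finite-dimensional) modules on which the
   central elements K^N, E^N, F^N act by the same scalars as on V *)
Definition same_Z0 xi N d (K Ki E F : 'M[C]_d) (M : Umod xi) : Prop :=
  forall c : C,
    (K ^+ N = c%:M -> uK M ^+ N = c%:M) /\
    (E ^+ N = c%:M -> uE M ^+ N = c%:M) /\
    (F ^+ N = c%:M -> uF M ^+ N = c%:M).

(* projective in that category: every epimorphism M ->> M' lets every
   morphism V -> M' lift to V -> M *)
Definition Uprojective xi N d (K Ki E F : 'M[C]_d) : Prop :=
  forall (HV : is_Umod xi K Ki E F) (M M' : Umod xi),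
    same_Z0 N K Ki E F M -> same_Z0 N K Ki E F M' ->
    forall (p : 'M[C]_(udim M, udim M')), Uhom p -> row_full p ->
    forall (g : 'M[C]_(d, udim M')), Uhom (M := MkUmod HV) g ->
    exists h : 'M[C]_(d, udim M), Uhom (M := MkUmod HV) h /\ h *m p = g.

(* The module V(alpha,beta,mu), written via A = omega^alpha,           *)
(* B = omega^beta, Z = omega^mu; basis v_n, n in Z/NZ = 'I_N.          *)
Definition Vx N (A : C) : 'M[C]_N :=
  \matrix_(i < N, j < N) (if i == j then A * (qxi N) ^- (2 * i)%N else 0).
Definition Vxi N (A : C) : 'M[C]_N :=
  \matrix_(i < N, j < N) (if i == j then A^-1 * (qxi N) ^+ (2 * i)%N else 0).
Definition Vy N (B : C) : 'M[C]_N :=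
  \matrix_(i < N, j < N) (if (j : nat) == ((i + N - 1) %% N)%N then B else 0).
Definition Vyi N (B : C) : 'M[C]_N :=
  \matrix_(i < N, j < N) (if (j : nat) == ((i + 1) %% N)%N then B^-1 else 0).

(* K |-> x, E |-> xi y (z - x), F |-> y^{-1} (1 - z^{-1} x^{-1}) *)
Definition VK N (A : C) : 'M[C]_N := Vx N A.
Definition VKi N (A : C) : 'M[C]_N := Vxi N A.
Definition VE N (A B Z : C) : 'M[C]_N := qxi N *: ((Z%:M - Vx N A) *m Vy N B).
Definition VF N (A B Z : C) : 'M[C]_N := (1%:M - Z^-1 *: Vxi N A) *m Vyi N B.

Definition psi (a b m : C) : 'M[C]_2 :=
  \matrix_(i < 2, j < 2)
    (if (i : nat) == 0%N then (if (j : nat) == 0%N then a else - b * (a - m))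
     else (if (j : nat) == 0%N then b^-1 * (a - m^-1) else m + m^-1 - a)).

End Defs.

(* Main.v *)
Require Import Defs.
From HB Require Import structures.
From mathcomp Require Import all_boot all_order all_algebra.
From mathcomp Require Import complex.
From mathcomp Require Import reals trigo.
From mathcomp Require Import fingroup perm.
From mathcomp Require Import ring lra zify.
Set Implicit Arguments. Unset Strict Implicit. Unset Printing Implicit Defensive.
Import Order.TTheory GRing.Theory Num.Theory.
Local Open Scope ring_scope.

Section Roots.
Variable R : realType.
Local Notation C := (complex R).
Variable n : nat.
Local Notation N := n.+1.
Hypothesis hn : (0 < n)%N.

Lemma cis_pow (x : R) t : (Complex (cos x) (sin x) : C) ^+ t = Complex (cos (t%:R * x)) (sin (t%:R * x)).
Proof.
elim: t => [|t IH]; first by rewrite expr0 mul0r cos0 sin0.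
rewrite exprSr IH mulrSr mulrDl mul1r cosD sinD.
rewrite -[(_ +i* _)%C * (_ +i* _)%C]/(_ +i* _)%C; congr Complex; ring.
Qed.

Local Notation xi := (qxi R N).

Lemma xi_pow t : xi ^+ t = Complex (cos (t%:R * (pi / N%:R))) (sin (t%:R * (pi / N%:R))).
Proof. exact: cis_pow. Qed.

Lemma NR_neq0 : (N%:R : R) != 0.
Proof. by rewrite pnatr_eq0. Qed.

Lemma xiN : xi ^+ N = -1.
Proof.
rewrite xi_pow mulrCA divff ?NR_neq0 // mulr1 cospi sinpi.
by rewrite -[-1 : C]/(Complex (-1) (-0)) oppr0.
Qed.

Lemma xi_neq0 : xi != 0.
Proof. by apply/eqP => h; have := xiN; rewrite h expr0n /= => /eqP; rewrite eq_sym oppr_eq0 oner_eq0. Qed.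

Lemma Im_xi_gt0 t : (0 < t < N)%N -> 0 < complex.Im (xi ^+ t).
Proof.
move=> /andP[t0 tN]; rewrite xi_pow /=; apply: sin_gt0_pi.
have Np : (0 : R) < N%:R by rewrite ltr0n.
have tp : (0 : R) < t%:R by rewrite ltr0n.
have tN' : (t%:R : R) < N%:R by rewrite ltr_nat.
apply/andP; split; first by rewrite mulr_gt0 // divr_gt0 // pi_gt0.
rewrite mulrA ltr_pdivrMr // mulrC ltr_pM2l //; exact: pi_gt0.
Qed.

Lemma xi_pow_neq1 t : (0 < t < N.*2)%N -> xi ^+ t != 1.
Proof.
move=> /andP[t0 t2].
have [tN|Nt] := ltnP t N.
  apply/eqP => h; have := Im_xi_gt0 (t:=t); rewrite h t0 tN /= => /(_ isT).
  by rewrite ltxx.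
have [->|Nt'] := eqVneq t N.
  by rewrite xiN -subr_eq0 -opprD oppr_eq0 -(natrD _ 1 1) pnatr_eq0.
have lt: (N < t)%N by rewrite ltn_neqAle eq_sym Nt' Nt.
rewrite -(subnKC Nt) exprD xiN mulN1r; apply/eqP => h.
have := @Im_xi_gt0 (t - N); rewrite ltn_subRL addn0 lt /=.
rewrite ltn_subLR // addnn t2 => /(_ isT).
have -> : xi ^+ (t - N) = -1 by rewrite -h opprK.
by rewrite /= oppr0 ltxx.
Qed.

Definition om := xi ^+ 2.

Lemma om_prim : N.-primitive_root om.
Proof.
apply/andP; split => //; apply/forallP => i; rewrite unity_rootE.
have [eq|ne] := eqVneq i.+1 N.
  by rewrite eq /om -exprM mulnC exprM xiN sqrrN expr1n eqxx.
have lt : (i.+1 < N)%N by rewrite ltn_neqAle ne ltn_ord.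
apply/eqP/negbTE; rewrite /om -exprM; apply: xi_pow_neq1.
by rewrite mul2n double_gt0 /= ltn_double.
Qed.

Lemma omN : om ^+ N = 1.
Proof. exact: prim_expr_order om_prim. Qed.

Lemma om_neq0 : om != 0.
Proof. by rewrite expf_neq0 // xi_neq0. Qed.

Lemma om_inj (i j : nat) : (i < N)%N -> (j < N)%N -> om ^+ i = om ^+ j -> i = j.
Proof.
move=> iN jN /eqP; rewrite (eq_prim_root_expr om_prim) !modn_small //.
by move/eqP.
Qed.

Lemma expz_mod (x : C) (j : int) : x != 0 -> x ^+ N = 1 ->
  x ^ j = x ^+ `|(j %% N)%Z|%N.
Proof.
move=> x0 xN; rewrite {1}(divz_eq j N) expfzDr // -exprz_exp.
rewrite exprzAC -exprnP xN exp1rz mul1r.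
rewrite exprnP gez0_abs //; exact: modz_ge0.
Qed.

Lemma absz_mod_lt (j : int) : (`|(j %% N)%Z| < N)%N.
Proof.
by rewrite -ltz_nat gez0_abs ?modz_ge0 // ltz_pmod.
Qed.

End Roots.

Section VBasic.
Variable R : realType.
Local Notation C := (complex R).
Variable n : nat.
Local Notation N := n.+1.
Hypothesis hn : (0 < n)%N.
Variables (A B Z : C).
Hypotheses (A0 : A != 0) (B0 : B != 0) (Z0 : Z != 0).

Local Notation xi := (qxi R N).
Local Notation om := (om R n).

Definition ev (i : 'I_N) : 'rV[C]_N := delta_mx 0 i.
Definition pos (t : nat) : 'I_N := Ordinal (ltn_pmod t (ltn0Sn n)).
Definition prv (i : 'I_N) : 'I_N := pos (i + N - 1).
Definition nxt (i : 'I_N) : 'I_N := pos (i + 1).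
Definition lam (i : 'I_N) : C := A * xi ^- (2 * i).
Definition cE (i : 'I_N) : C := xi * ((Z - lam i) * B).
Definition cF (i : 'I_N) : C := (1 - Z^-1 * (lam i)^-1) * B^-1.

Lemma pos_ord (i : 'I_N) : pos i = i.
Proof. by apply/val_inj; rewrite /= modn_small. Qed.

Lemma prv_pos t : prv (pos t.+1) = pos t.
Proof.
apply/val_inj => /=.
have -> : forall x, (x + N - 1 = x + n)%N by move=> x; rewrite addnS subn1.
by rewrite modnDml addSnnS modnDr.
Qed.

Lemma nxt_pos t : nxt (pos t) = pos t.+1.
Proof. by apply/val_inj => /=; rewrite modnDml addn1. Qed.

Lemma ev_neq0 i : ev i != 0.
Proof. by apply/rV0Pn; exists i; rewrite mxE !eqxx oner_eq0. Qed.

Lemma row_diagish (f : 'I_N -> C) (M : 'M[C]_N) i :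
  (forall j, M i j = if i == j then f i else 0) -> ev i *m M = f i *: ev i.
Proof.
move=> hM; rewrite /ev -rowE; apply/rowP => j; rewrite !mxE hM eqxx /= [j == i]eq_sym.
by case: eqP => _; rewrite ?mulr1 ?mulr0.
Qed.

Lemma row_shift (g : 'I_N -> 'I_N) (c : C) (M : 'M[C]_N) i :
  (forall j, M i j = if (j : nat) == g i then c else 0) -> ev i *m M = c *: ev (g i).
Proof.
move=> hM; rewrite /ev -rowE; apply/rowP => j; rewrite !mxE hM eqxx /=.
case: (eqVneq j (g i)) => [->|ne]; first by rewrite !eqxx mulr1.
by rewrite ifF ?mulr0 //; apply/negbTE.
Qed.

Lemma eK i : ev i *m VK N A = lam i *: ev i.
Proof. by apply: row_diagish => j; rewrite mxE. Qed.

Lemma lam_neq0 i : lam i != 0.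
Proof. by rewrite mulf_neq0 // invr_neq0 // expf_neq0 // xi_neq0. Qed.

Lemma eKi i : ev i *m VKi N A = (lam i)^-1 *: ev i.
Proof.
apply: (@row_diagish (fun i => (lam i)^-1) (VKi N A) i) => j; rewrite mxE /lam invfM invrK.
by case: eqP => // ->; rewrite mulrC.
Qed.

Lemma eY i : ev i *m Vy N B = B *: ev (prv i).
Proof. by apply: row_shift => j; rewrite mxE. Qed.

Lemma eYi i : ev i *m Vyi N B = B^-1 *: ev (nxt i).
Proof. by apply: row_shift => j; rewrite mxE. Qed.

Lemma eE i : ev i *m VE N A B Z = cE i *: ev (prv i).
Proof.
rewrite /VE -scalemxAr mulmxA mulmxBr mul_mx_scalar -/(VK N A) eK -scalerBl.
by rewrite -scalemxAl eY !scalerA /cE mulrA.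
Qed.

Lemma eF i : ev i *m VF N A B Z = cF i *: ev (nxt i).
Proof.
rewrite /VF mulmxA mulmxBr mulmx1 -scalemxAr -/(VKi N A) eKi scalerA.
rewrite -{1}[ev i]scale1r -scalerBl -scalemxAl eYi scalerA //.
Qed.

Lemma VK_diag : VK N A = diag_mx (\row_i lam i).
Proof.
apply/matrixP => i j; rewrite !mxE; case: eqP => [->|_]; by rewrite ?mulr1n ?mulr0n.
Qed.

Lemma lam_pos t : lam (pos t) = A / om ^+ t.
Proof.
by rewrite /lam /= exprM (prim_expr_mod (@om_prim R n)).
Qed.

Lemma lam_inj i j : lam i = lam j -> i = j.
Proof.
rewrite -(pos_ord i) -(pos_ord j) !lam_pos => /(mulfI A0)/invr_inj.
by move/(@om_inj R n _ _ (ltn_ord i) (ltn_ord j)) => /val_inj ->.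
Qed.



Lemma step_sub (W : 'M[C]_N) (M : 'M[C]_N) i j c :
  stablemx W M -> ev i *m M = c *: ev j -> c != 0 -> (ev i <= W)%MS -> (ev j <= W)%MS.
Proof.
move=> sW eM c0 sub.
have : (c *: ev j <= W)%MS by rewrite -eM; exact: submx_trans (submxMr M sub) sW.
by move/(scalemx_sub c^-1); rewrite scalerA mulVf // scale1r.
Qed.

Lemma comp_sub (W : 'M[C]_N) (w : 'rV[C]_N) i :
  stablemx W (VK N A) -> (w <= W)%MS -> w 0 i != 0 -> (ev i <= W)%MS.
Proof.
move=> sK sw wi.
pose p := \prod_(j < N | j != i) ('X - (lam j)%:P).
have pi0 : p.[lam i] != 0.
  rewrite horner_prod; apply/prodf_neq0 => j ji; rewrite hornerXsubC subr_eq0.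
  by apply/eqP => /lam_inj eq; move: ji; rewrite eq eqxx.
have eq : w *m horner_mx (VK N A) p = (w 0 i * p.[lam i]) *: ev i.
  rewrite VK_diag horner_mx_diag mul_mx_diag.
  apply/rowP => j; rewrite !mxE.
  case: (eqVneq j i) => [->|ji]; first by rewrite eqxx mulr1.
  rewrite mulr0 /p horner_prod (bigD1 j) //=.
  by rewrite hornerXsubC subrr mul0r mulr0.
have := submx_trans (submxMr (horner_mx (VK N A) p) sw) (horner_mx_stable p sK).
rewrite eq => /(scalemx_sub (w 0 i * p.[lam i])^-1).
by rewrite scalerA mulVf ?scale1r // mulf_neq0.
Qed.

Lemma nz_has_ev (W : 'M[C]_N) : W != 0 -> stablemx W (VK N A) -> exists i, (ev i <= W)%MS.
Proof.
move=> /matrix0Pn [r [j Wrj]] sK; exists j.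
by apply: (comp_sub sK (row_sub r W)); rewrite mxE.
Qed.

Lemma down_path (W : 'M[C]_N) (b : nat) t :
  stablemx W (VE N A B Z) -> (forall s, (0 < s <= t)%N -> cE (pos (b + s)) != 0) ->
  (ev (pos (b + t)) <= W)%MS -> (ev (pos b) <= W)%MS.
Proof.
move=> sE; elim: t => [|t IH] hc h; first by rewrite addn0 in h.
have hc' : forall s, (0 < s <= t)%N -> cE (pos (b + s)) != 0.
  by move=> s /andP[s0 st]; apply: hc; rewrite s0 (leq_trans st).
apply: (IH hc').
have eM : ev (pos (b + t.+1)) *m VE N A B Z = cE (pos (b + t.+1)) *: ev (pos (b + t)).
  by rewrite eE addnS prv_pos.
by apply: (step_sub sE eM _ h); apply: hc; rewrite /= leqnn.
Qed.

Lemma up_path (W : 'M[C]_N) (b : nat) t :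
  stablemx W (VF N A B Z) -> (forall s, (s < t)%N -> cF (pos (b + s)) != 0) ->
  (ev (pos b) <= W)%MS -> (ev (pos (b + t)) <= W)%MS.
Proof.
move=> sF; elim: t => [|t IH] hc h; first by rewrite addn0.
have hc' : forall s, (s < t)%N -> cF (pos (b + s)) != 0.
  by move=> s st; apply: hc; rewrite ltnS ltnW.
have eM : ev (pos (b + t)) *m VF N A B Z = cF (pos (b + t)) *: ev (pos (b + t.+1)).
  by rewrite eF nxt_pos addnS.
exact: (step_sub sF eM (hc t (ltnSn t)) (IH hc' h)).
Qed.

Lemma pos_dist (b i : 'I_N) : pos (b + (i + N - b) %% N) = i.
Proof.
apply/val_inj => /=; rewrite modnDmr subnKC ?modnDr ?modn_small //.
exact: leq_trans (ltnW (ltn_ord b)) (leq_addl i N).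
Qed.

Lemma pos_shift_inj (b : nat) s k : (s < N)%N -> (k < N)%N ->
  pos (b + s) = pos (b + k) -> s = k.
Proof. by move=> sN kN /(congr1 val) /= /eqP; rewrite eqn_modDl !modn_small // => /eqP. Qed.

Lemma pos_shift_neq (b : 'I_N) s : (0 < s < N)%N -> pos (b + s) != b.
Proof.
move=> /andP[s0 sN]; apply/eqP => h.
have := @pos_shift_inj b s 0 sN (ltn0Sn n); rewrite addn0 pos_ord h => /(_ erefl) s00.
by rewrite s00 in s0.
Qed.

Local Notation VKA := (VK N A).
Local Notation VKiA := (VKi N A).
Local Notation VEA := (VE N A B Z).
Local Notation VFA := (VF N A B Z).

Lemma reach_base (W : 'M[C]_N) (b : 'I_N) :
  Ustable VKA VKiA VEA VFA W -> W != 0 ->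
  (forall i, cE i = 0 -> i = b) -> (ev b <= W)%MS.
Proof.
move=> [sK _ sE _] W0 hE.
have [i hi] := nz_has_ev W0 sK.
rewrite -(pos_ord b); apply: (@down_path W b ((i + N - b) %% N) sE).
  move=> s /andP[s0 st]; apply/eqP => /hE h.
  have : pos (b + s) != b.
    by apply: pos_shift_neq; rewrite s0 (leq_ltn_trans st) // ltn_pmod.
  by rewrite h eqxx.
by rewrite pos_dist.
Qed.

Lemma eqmx1P (W : 'M[C]_N) : (forall j, (ev j <= W)%MS) -> (W == 1%:M)%MS.
Proof.
move=> h; apply/andP; split; first exact: submx1.
by apply/row_subP => j; rewrite row1; exact: h.
Qed.

Lemma simple_noE : (forall i, cE i != 0) -> Usimple VKA VKiA VEA VFA.
Proof.
move=> hE; split => // W sW; case: (eqVneq W 0) => [->|W0]; [by left | right].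
apply: eqmx1P => j; apply: (reach_base sW W0) => i /eqP.
by rewrite (negbTE (hE i)).
Qed.

Lemma simple_case (n0 : 'I_N) : (forall i, cE i = 0 -> i = n0) ->
  (forall i, cF i = 0 -> i = pos (n0 + n)) -> Usimple VKA VKiA VEA VFA.
Proof.
move=> hE hF; split => // W sW; case: (eqVneq W 0) => [->|W0]; [by left | right].
have b0 := reach_base sW W0 hE.
apply: eqmx1P => j; rewrite -(pos_dist n0 j).
case: sW => _ _ _ sF.
apply: (up_path sF) => [s st|]; last by rewrite pos_ord.
have sN : (s < n)%N.
  by have := ltn_pmod (j + N - n0) (ltn0Sn n); rewrite ltnS => /(leq_trans st).
apply/eqP => /hF /(@pos_shift_inj n0 s n (ltn_trans sN (ltnSn n)) (ltnSn n)) h.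
by rewrite h ltnn in sN.
Qed.

Section Case3.
Variables (n0 : 'I_N) (k : nat).
Hypotheses (k1 : (0 < k)%N) (kn : (k < n)%N).
Hypotheses (hE : forall i, cE i = 0 -> i = n0) (hE0 : cE n0 = 0).
Hypotheses (hF : forall i, cF i = 0 -> i = pos (n0 + k)) (hF0 : cF (pos (n0 + k)) = 0).

Lemma kN : (k < N)%N. Proof. exact: ltn_trans kn (ltnSn n). Qed.

Lemma rot_inj : injective (fun i : 'I_N => pos (n0 + i)).
Proof. by move=> i j /pos_shift_inj h; apply/val_inj/h. Qed.

Definition rotperm := perm rot_inj.
Definition W0 : 'M[C]_N := pid_mx k.+1 *m perm_mx rotperm.

Lemma rowW0 (i : 'I_N) : row i W0 = ((i <= k)%N)%:R *: ev (pos (n0 + i)).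
Proof.
rewrite row_mul.
have -> : row i (pid_mx k.+1 : 'M[C]_N) = ((i <= k)%N)%:R *: ev i.
  apply/rowP => j; rewrite !mxE eqxx /= [j == i]eq_sym.
  by rewrite ltnS; case: (i <= k)%N; rewrite ?andbT ?andbF ?mulr1 ?mul1r ?mul0r.
rewrite -(scalemxAl _ (ev i) (perm_mx rotperm)); congr (_ *: _).
rewrite /ev -rowE; apply/rowP => j; rewrite /perm_mx !mxE permE.
by rewrite eqxx eq_sym.
Qed.

Lemma evW0 t : (t <= k)%N -> (ev (pos (n0 + t)) <= W0)%MS.
Proof.
move=> tk; have tN : (t < N)%N by exact: leq_ltn_trans tk kN.
have := row_sub (pos t) W0; rewrite rowW0 /= modn_small // tk scale1r.
by [].
Qed.

Lemma rankW0 : \rank W0 = k.+1.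
Proof.
rewrite /W0 mxrankMfree ?row_free_unit ?unitmx_perm // rank_pid_mx //; exact: kN.
Qed.

Lemma W0_stable : Ustable VKA VKiA VEA VFA W0.
Proof.
have gen : forall M : 'M[C]_N, (forall t, (t <= k)%N -> (ev (pos (n0 + t)) *m M <= W0)%MS) ->
    stablemx W0 M.
  move=> M h; apply/row_subP => i; rewrite row_mul rowW0.
  case: leqP => ik; last by rewrite scale0r mul0mx sub0mx.
  by rewrite scale1r h.
split; apply: gen => t tk.
- by rewrite eK scalemx_sub // evW0.
- by rewrite eKi scalemx_sub // evW0.
- rewrite eE; case: t tk => [|t] tk.
    by rewrite addn0 pos_ord hE0 scale0r sub0mx.
  by rewrite addnS prv_pos scalemx_sub // evW0 // ltnW.
- rewrite eF nxt_pos; case: (ltngtP t k) tk => // [tk _|-> _].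
    by rewrite -addnS scalemx_sub // evW0.
  by rewrite hF0 scale0r sub0mx.
Qed.

Lemma W0_neq0 : W0 != 0.
Proof. by rewrite -mxrank_eq0 rankW0. Qed.

Lemma W0_not1 : ~~ (W0 == 1%:M)%MS.
Proof.
apply/negP => /andP[_ h]; have := mxrankS h; rewrite mxrank1 rankW0 ltnS.
by rewrite leqNgt kn.
Qed.

Lemma reach_n0 (W : 'M[C]_N) : Ustable VKA VKiA VEA VFA W -> W != 0 -> (ev n0 <= W)%MS.
Proof. by move=> sW W0; exact: reach_base sW W0 hE. Qed.

Lemma W0_sub (W : 'M[C]_N) : Ustable VKA VKiA VEA VFA W -> W != 0 -> (W0 <= W)%MS.
Proof.
move=> sW Wn0; have b0 := reach_n0 sW Wn0.
apply/row_subP => i; rewrite rowW0; case: leqP => ik; last by rewrite scale0r sub0mx.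
rewrite scale1r; case: sW => _ _ _ sF.
apply: (up_path sF) => [s st|]; last by rewrite pos_ord.
have sN : (s < N)%N by exact: ltn_trans st (leq_ltn_trans ik kN).
apply/eqP => /hF /(@pos_shift_inj n0 s k sN kN) h.
by move: st; rewrite h ltnNge ik.
Qed.

Lemma case3_reducible : Ureducible VKA VKiA VEA VFA.
Proof. exists W0; split; [exact: W0_stable | exact: W0_neq0 | exact: W0_not1]. Qed.

Lemma case3_simple_sub : Usimple_sub VKA VKiA VEA VFA W0 /\ \rank W0 = k.+1.
Proof.
split; last exact: rankW0.
split; [exact: W0_stable | exact: W0_neq0 |] => W sW sub.
case: (eqVneq W 0) => [->|Wn0]; [by left | right].
by apply/andP; split => //; exact: W0_sub.
Qed.

Lemma case3_indec : Uindecomposable VKA VKiA VEA VFA.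
Proof.
split => // W1 W2 s1 s2 /mxdirect_addsP cap _.
case: (boolP (W1 == 0)) => [|W1n]; [by left|].
case: (boolP (W2 == 0)) => [|W2n]; [by right|].
have : (ev n0 <= W1 :&: W2)%MS by rewrite sub_capmx !reach_n0.
by rewrite cap submx0 (negbTE (ev_neq0 _)).
Qed.

Lemma case3_endo T : Uendo VKA VKiA VEA VFA T -> exists c, T = c%:M.
Proof.
case=> hK _ hE' hF'.
have diag : forall i j, i != j -> T i j = 0.
  move=> i j ij; have := congr1 (fun M : 'M[C]_N => M i j) hK.
  rewrite VK_diag mul_diag_mx mul_mx_diag !mxE => /eqP.
  rewrite [X in _ == X]mulrC -subr_eq0 -mulrBl mulf_eq0 => /orP[|/eqP //].
  by rewrite subr_eq0 => /eqP /lam_inj /eqP; rewrite (negbTE ij).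
have rowT : forall i, ev i *m T = T i i *: ev i.
  move=> i; apply: (@row_diagish (fun i => T i i)) => j.
  by case: eqVneq => [->//|ij]; exact: diag.
have stepE : forall i, cE i != 0 -> T (prv i) (prv i) = T i i.
  move=> i c0; have := congr1 (fun M => ev i *m M) hE'.
  rewrite /= !mulmxA eE -scalemxAl !rowT -scalemxAl eE !scalerA.
  move/(congr1 (fun v : 'rV[C]_N => v 0 (prv i))); rewrite !mxE !eqxx /= !mulr1.
  by rewrite [X in _ = X]mulrC => /(mulfI c0).
have stepF : forall i, cF i != 0 -> T (nxt i) (nxt i) = T i i.
  move=> i c0; have := congr1 (fun M => ev i *m M) hF'.
  rewrite /= mulmxA [X in _ = X]mulmxA eF -scalemxAl !rowT -scalemxAl eF !scalerA.
  move/(congr1 (fun v : 'rV[C]_N => v 0 (nxt i))); rewrite !mxE !eqxx /= !mulr1.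
  by rewrite [X in _ = X]mulrC => /(mulfI c0).
have allT : forall t, T (pos t) (pos t) = T (pos 0) (pos 0).
  elim => [//|t IH]; rewrite -IH.
  case: (eqVneq (cE (pos t.+1)) 0) => [/hE e0|e0]; last by rewrite -(stepE _ e0) prv_pos.
  case: (eqVneq (cF (pos t)) 0) => [/hF f0|f0]; last by rewrite -(stepF _ f0) nxt_pos.
  have : pos (n0 + k.+1) = pos (n0 + 0).
    by rewrite addn0 pos_ord addnS -nxt_pos -f0 nxt_pos e0.
  by move=> h; have := pos_shift_inj (s:=k.+1) (k:=0) kn (ltn0Sn n) h.
exists (T (pos 0) (pos 0)); apply/matrixP => i j; rewrite mxE.
case: eqVneq => [<-|ij]; last by rewrite diag.
by rewrite mulr1n -(pos_ord i) (allT i).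
Qed.

End Case3.

Definition act d (M : 'M[C]_d) t (v : 'rV[C]_d) := iter t (fun u => u *m M) v.

Lemma actS d (M : 'M[C]_d) t v : act M t.+1 v = act M t v *m M.
Proof. by []. Qed.

Lemma actSr d (M : 'M[C]_d) t v : act M t.+1 v = act M t (v *m M).
Proof. exact: iterSr. Qed.

Lemma actZ d (M : 'M[C]_d) t c v : act M t (c *: v) = c *: act M t v.
Proof. by elim: t => [//|t IH]; rewrite !actS IH -scalemxAl. Qed.

Lemma act0v d (M : 'M[C]_d) t : act M t 0 = 0.
Proof. by elim: t => [//|t IH]; rewrite actS IH mul0mx. Qed.

Lemma actD d (M : 'M[C]_d) s t v : act M (s + t) v = act M s (act M t v).
Proof. exact: iterD. Qed.

Lemma act_hom d d' (M : 'M[C]_d) (M' : 'M[C]_d') (p : 'M[C]_(d, d')) t v :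
  M *m p = p *m M' -> act M t v *m p = act M' t (v *m p).
Proof.
move=> hp; elim: t => [//|t IH].
by rewrite !actS -mulmxA hp mulmxA IH.
Qed.

Lemma act_pow d (M : 'M[C]_d) t v : act M t v = v *m M ^+ t.
Proof.
elim: t => [|t IH]; first by rewrite expr0 mulmx1.
by rewrite actS IH exprSr -mulmxA mulmxE.
Qed.

Lemma act_eig d (M : 'M[C]_d) t v c : v *m M = c *: v -> act M t v = c ^+ t *: v.
Proof.
move=> h; elim: t => [|t IH]; first by rewrite expr0 scale1r.
by rewrite actS IH -scalemxAl h scalerA exprSr mulrC.
Qed.

Lemma scal_ev_inj a b (j : 'I_N) : a *: ev j = b *: ev j -> a = b.
Proof.
move/(congr1 (fun v : 'rV[C]_N => v 0 j)); rewrite !mxE !eqxx /=.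
by rewrite !mulr1.
Qed.

Definition mu t := Z / om ^+ t.

Lemma mu_neq0 t : mu t != 0.
Proof. by rewrite mulf_neq0 // invr_neq0 // expf_neq0 // (@om_neq0 R n). Qed.

Definition kap t := \sum_(s < t) (xi - xi^-1) * (mu s - (mu s)^-1).

Definition Pv d (K : 'M[C]_d) (v : 'rV[C]_d) :=
  (N%:R)^-1 *: \sum_(i < N) (Z^-1) ^+ i *: act K i v.

Lemma Pv_eig d (K : 'M[C]_d) v : v *m K = Z *: v -> Pv K v = v.
Proof.
move=> h; rewrite /Pv.
have -> : \sum_(i < N) (Z^-1) ^+ i *: act K i v = \sum_(i < N) v.
  apply: eq_bigr => i _; rewrite (act_eig _ h) scalerA -exprMn mulVf // expr1n.
  by rewrite scale1r.
by rewrite sumr_const card_ord -scalerMnr scalerMnl -mulr_natr mulVf ?scale1r // pnatr_eq0.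
Qed.

Lemma Pv_hom d d' (K : 'M[C]_d) (K' : 'M[C]_d') (p : 'M[C]_(d, d')) v :
  K *m p = p *m K' -> Pv K v *m p = Pv K' (v *m p).
Proof.
move=> hp; rewrite /Pv -scalemxAl mulmx_suml; congr (_ *: _).
by apply: eq_bigr => i _; rewrite -scalemxAl (act_hom _ _ hp).
Qed.

Lemma Pv_K d (K : 'M[C]_d) v : act K N v = Z ^+ N *: v -> Pv K v *m K = Z *: Pv K v.
Proof.
move=> hN; rewrite /Pv -scalemxAl scalerA mulrC -scalerA; congr (_ *: _).
rewrite mulmx_suml scaler_sumr.
under eq_bigr do rewrite -scalemxAl.
rewrite big_ord_recr /= [in RHS]big_ord_recl /= addrC; congr (_ + _).
  rewrite -[act K n v *m K]/(act K N v) hN expr0 scale1r !scalerA; congr (_ *: _).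
  by rewrite exprS mulrCA -exprMn mulVf // expr1n mulr1.
apply: eq_bigr => i _; rewrite scalerA exprS mulrA mulfV // mul1r.
by [].
Qed.

Section Universal.
Variables (d : nat) (K Ki E F : 'M[C]_d).
Hypothesis HM : is_Umod xi K Ki E F.

Lemma Ki_of_K (u : 'rV[C]_d) c : u *m K = c *: u -> c != 0 -> u *m Ki = c^-1 *: u.
Proof.
case: HM => hKKi _ _ _ _ hu c0.
rewrite -[u *m Ki]scale1r -(mulVf c0) -scalerA scalemxAl -hu -mulmxA hKKi.
by rewrite mulmx1.
Qed.

Lemma weightF (v : 'rV[C]_d) t : v *m K = Z *: v -> act F t v *m K = mu t *: act F t v.
Proof.
case: HM => _ _ _ hFK _ hv; elim: t => [|t IH]; first by rewrite /mu expr0 divr1.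
rewrite actS -mulmxA hFK -scalemxAr mulmxA IH -scalemxAl scalerA -actS.
by congr (_ *: _); rewrite /mu [om ^+ t.+1]exprS [(om * _)^-1]invfM [RHS]mulrCA.
Qed.

Lemma weightE (u : 'rV[C]_d) c t : u *m K = c *: u -> act E t u *m K = (c * om ^+ t) *: act E t u.
Proof.
case: HM => _ _ hEK _ _ hu; elim: t => [|t IH]; first by rewrite expr0 mulr1.
rewrite actS -mulmxA hEK -scalemxAr mulmxA IH -scalemxAl scalerA -actS.
by congr (_ *: _); rewrite [om ^+ t.+1]exprS [RHS]mulrCA.
Qed.

Lemma EF_rel (v : 'rV[C]_d) t : v *m K = Z *: v -> v *m E = 0 ->
  act F t.+1 v *m E = kap t.+1 *: act F t v.
Proof.
case: HM => _ _ _ _ hc hv hE.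
have FE : F *m E = E *m F + (xi - xi^-1) *: (K - Ki) by rewrite -hc addrC subrK.
elim: t => [|t IH].
  rewrite actS /= -mulmxA FE mulmxDr mulmxA hE mul0mx add0r -scalemxAr mulmxBr.
  rewrite hv (Ki_of_K hv Z0) -scalerBl scalerA /kap big_ord1 /mu expr0 divr1.
  by [].
rewrite actS -mulmxA FE mulmxDr mulmxA IH -scalemxAl -actS -scalemxAr mulmxBr.
have hw := weightF t.+1 hv.
rewrite hw (Ki_of_K hw (mu_neq0 t.+1)) -scalerBl scalerA -scalerDl.
by rewrite /kap [in RHS]big_ord_recr.
Qed.

Lemma EF_iter (v : 'rV[C]_d) t : v *m K = Z *: v -> v *m E = 0 ->
  act E t (act F t v) = (\prod_(s < t) kap s.+1) *: v.
Proof.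
move=> hv hE; elim: t => [|t IH]; first by rewrite big_ord0 scale1r.
by rewrite actSr EF_rel // actZ IH scalerA big_ord_recr /= mulrC.
Qed.

End Universal.

Section Proj.
Variables (n0 : 'I_N).
Hypotheses (hE : forall i, cE i = 0 -> i = n0) (hE0 : cE n0 = 0).
Hypotheses (hF : forall i, cF i = 0 -> i = pos (n0 + n)) (hF0 : cF (pos (n0 + n)) = 0).
Hypothesis hlam : forall t, lam (pos (n0 + t)) = mu t.
Hypothesis haZ : A ^+ N = Z ^+ N.

Lemma rowev (i : 'I_N) m (X : 'M[C]_(N, m)) : row i X = ev i *m X.
Proof. exact: rowE. Qed.

Lemma pos_n0 : pos (n0 + 0) = n0. Proof. by rewrite addn0 pos_ord. Qed.

Lemma prv_posS b s : prv (pos (b + s.+1)) = pos (b + s).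
Proof. by rewrite addnS prv_pos. Qed.

Lemma nxt_posS b s : nxt (pos (b + s)) = pos (b + s.+1).
Proof. by rewrite addnS nxt_pos. Qed.

Lemma ev_n0K : ev n0 *m VKA = Z *: ev n0.
Proof. by rewrite eK -{1}pos_n0 hlam /mu expr0 divr1. Qed.

Lemma ev_n0E : ev n0 *m VEA = 0.
Proof. by rewrite eE hE0 scale0r. Qed.

Definition fF t := \prod_(s < t) cF (pos (n0 + s)).

Lemma cF_ne s : (s < n)%N -> cF (pos (n0 + s)) != 0.
Proof.
move=> sn; apply/eqP => /hF /(@pos_shift_inj n0 s n (ltn_trans sn (ltnSn n)) (ltnSn n)) h.
by rewrite h ltnn in sn.
Qed.

Lemma fF_neq0 t : (t <= n)%N -> fF t != 0.
Proof.
move=> tn; apply/prodf_neq0 => s _; apply: cF_ne; exact: leq_trans (ltn_ord s) tn.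
Qed.

Lemma fFS t : fF t.+1 = fF t * cF (pos (n0 + t)).
Proof. by rewrite /fF big_ord_recr. Qed.

Lemma cE_ne t : (0 < t < N)%N -> cE (pos (n0 + t)) != 0.
Proof. by move=> h; apply/eqP => /hE; apply/eqP; exact: pos_shift_neq. Qed.

Lemma actF_V t : act VFA t (ev n0) = fF t *: ev (pos (n0 + t)).
Proof.
elim: t => [|t IH]; first by rewrite /fF big_ord0 scale1r pos_n0.
by rewrite actS IH -scalemxAl eF nxt_posS scalerA -fFS.
Qed.

Lemma kap_V (HV : is_Umod xi VKA VKiA VEA VFA) s : (s < n)%N ->
  kap s.+1 = cF (pos (n0 + s)) * cE (pos (n0 + s.+1)).
Proof.
move=> sn.
have := EF_rel HV s ev_n0K ev_n0E.
rewrite !actF_V -scalemxAl eE prv_posS !scalerA => /scal_ev_inj.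
rewrite fFS => h.
apply: (mulIf (fF_neq0 (ltnW sn))); rewrite -h; ring.
Qed.

Lemma VK_pow : VKA ^+ N = (A ^+ N)%:M.
Proof.
apply/row_matrixP => i; rewrite !rowev -act_pow (act_eig _ (eK i)) mul_mx_scalar.
congr (_ *: _); rewrite -(pos_ord i) lam_pos exprMn exprVn -exprM mulnC exprM.
by rewrite (omN R n) expr1n invr1 mulr1.
Qed.

Lemma actE_shift (b s : nat) : exists c, act VEA s (ev (pos (b + s))) = c *: ev (pos b).
Proof.
elim: s => [|s [c IH]]; first by exists 1; rewrite addn0 scale1r.
exists (cE (pos (b + s.+1)) * c).
by rewrite actSr eE prv_posS actZ IH scalerA.
Qed.

Lemma actF_shift (b s : nat) : exists c, act VFA s (ev (pos b)) = c *: ev (pos (b + s)).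
Proof.
elim: s => [|s [c IH]]; first by exists 1; rewrite addn0 scale1r.
exists (c * cF (pos (b + s))).
by rewrite actS IH -scalemxAl eF nxt_posS scalerA.
Qed.

Lemma VE_pow : VEA ^+ N = 0%:M.
Proof.
apply/row_matrixP => i; rewrite !rowev -act_pow mul_mx_scalar scale0r.
have [t tN ->] : exists2 t, (t < N)%N & i = pos (n0 + t).
  by exists ((i + N - n0) %% N)%N; [exact: ltn_pmod | rewrite pos_dist].
have [c hc] := actE_shift n0 t.
rewrite -[X in act _ X _](subnK tN).
by rewrite actD actS hc -scalemxAl pos_ord ev_n0E scaler0 act0v.
Qed.

Lemma VF_pow : VFA ^+ N = 0%:M.
Proof.
apply/row_matrixP => i; rewrite !rowev -act_pow mul_mx_scalar scale0r.
pose b' := pos (n0 + n).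
have tN : ((b' + N - i) %% N < N)%N by exact: ltn_pmod.
have [c hc] := actF_shift i ((b' + N - i) %% N)%N.
rewrite -[X in act _ X _](subnK tN).
have -> : ev i = ev (pos i) by rewrite pos_ord.
rewrite actD actS hc pos_dist -scalemxAl eF hF0 scale0r scaler0.
by rewrite act0v.
Qed.

Lemma lift_core (HV : is_Umod xi VKA VKiA VEA VFA)
  (d d' : nat) (K1 Ki1 E1 F1 : 'M[C]_d) (K2 Ki2 E2 F2 : 'M[C]_d')
  (H1 : is_Umod xi K1 Ki1 E1 F1) (H2 : is_Umod xi K2 Ki2 E2 F2)
  (HK1 : K1 ^+ N = (A ^+ N)%:M) (HE1 : E1 ^+ N = 0%:M) (HF1 : F1 ^+ N = 0%:M)
  (p : 'M[C]_(d, d'))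
  (pK : K1 *m p = p *m K2) (pKi : Ki1 *m p = p *m Ki2)
  (pE : E1 *m p = p *m E2) (pF : F1 *m p = p *m F2)
  (pfull : row_full p) (g : 'M[C]_(N, d'))
  (gK : VKA *m g = g *m K2) (gKi : VKiA *m g = g *m Ki2)
  (gE : VEA *m g = g *m E2) (gF : VFA *m g = g *m F2) :
  exists h : 'M[C]_(N, d),
    [/\ VKA *m h = h *m K1, VKiA *m h = h *m Ki1, VEA *m h = h *m E1 & VFA *m h = h *m F1]
    /\ h *m p = g.
Proof.
pose w' := ev n0 *m g.
have w'K : w' *m K2 = Z *: w' by rewrite -mulmxA -gK mulmxA ev_n0K -scalemxAl.
have w'E : w' *m E2 = 0 by rewrite -mulmxA -gE mulmxA ev_n0E mul0mx.
pose wt := w' *m pinvmx p.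
have wtp : wt *m p = w' by rewrite mulmxKpV // submx_full.
pose u := Pv K1 wt.
have actKN : forall v, act K1 N v = Z ^+ N *: v.
  by move=> v; rewrite act_pow HK1 mul_mx_scalar haZ.
have uK : u *m K1 = Z *: u by apply: Pv_K.
have up : u *m p = w' by rewrite (Pv_hom _ pK) wtp Pv_eig.
pose c := \prod_(s < n) kap s.+1.
have c0 : c != 0.
  apply/prodf_neq0 => s _; rewrite kap_V // mulf_neq0 // ?cF_ne //.
  by apply: cE_ne; rewrite /= ltnS ltn_ord.
pose w := c^-1 *: act E1 n (act F1 n u).
have wE : w *m E1 = 0.
  by rewrite -scalemxAl -actS act_pow HE1 mul_mx_scalar !scale0r scaler0.
have wK : w *m K1 = Z *: w.
  rewrite -scalemxAl (weightE H1 _ (weightF H1 _ uK)) /mu divfK; last first.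
    by rewrite expf_neq0 // (@om_neq0 R n).
  by rewrite !scalerA mulrC.
have wp : w *m p = w'.
  rewrite -scalemxAl (act_hom _ _ pE) (act_hom _ _ pF) up (EF_iter H2 _ w'K w'E).
  by rewrite scalerA mulVf // scale1r.
pose r t := (fF t)^-1 *: act F1 t w.
pose h := \matrix_(i < N) r ((i + N - n0) %% N)%N.
have rowh : forall t, (t < N)%N -> row (pos (n0 + t)) h = r t.
  move=> t tN; rewrite rowK; congr r.
  apply: (@pos_shift_inj n0); [exact: ltn_pmod | exact: tN | exact: pos_dist].
have wF : forall t, act F1 t w *m K1 = mu t *: act F1 t w.
  by move=> t; apply: (weightF H1).
have posP : forall i : 'I_N, exists2 t, (t < N)%N & i = pos (n0 + t).
  by move=> i; exists ((i + N - n0) %% N)%N; [exact: ltn_pmod | rewrite pos_dist].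
exists h; split; first split.
- apply/row_matrixP => i; have [t tN ->] := posP i.
  rewrite !row_mul rowev eK hlam -scalemxAl -rowev rowh // /r -scalemxAl wF.
  by rewrite !scalerA mulrC.
- apply/row_matrixP => i; have [t tN ->] := posP i.
  rewrite !row_mul rowev eKi hlam -scalemxAl -rowev rowh // /r -scalemxAl.
  by rewrite (Ki_of_K H1 (wF t) (mu_neq0 t)) !scalerA mulrC.
- apply/row_matrixP => i; have [t tN ->] := posP i.
  rewrite !row_mul rowev rowh // eE /r -!scalemxAl.
  case: t tN => [|s] tN.
    by rewrite pos_n0 hE0 !scale0r /= wE scaler0.
  have sn : (s < n)%N by [].
  rewrite prv_posS -rowev rowh ?(ltnW tN) // /r (EF_rel H1 s wK wE) !scalerA.
  congr (_ *: _); rewrite fFS kap_V //.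
  have f0 := fF_neq0 (ltnW sn); have cf0 := cF_ne sn.
  by field; rewrite f0 cf0.
- apply/row_matrixP => i; have [t tN ->] := posP i.
  rewrite [LHS]row_mul [RHS]row_mul rowev rowh // eF /r -scalemxAl -[RHS]scalemxAl -actS nxt_posS.
  move: tN; rewrite ltnS leq_eqVlt => /orP[/eqP ->|tn].
    by rewrite hF0 scale0r act_pow HF1 mul_mx_scalar !scale0r scaler0.
  rewrite -rowev rowh // /r !scalerA; congr (_ *: _); rewrite fFS.
  have f0 := fF_neq0 (ltnW tn); have cf0 := cF_ne tn.
  by field; rewrite f0 cf0.
apply/row_matrixP => i; have [t tN ->] := posP i.
rewrite row_mul rowh // /r -scalemxAl (act_hom _ _ pF) wp /w' rowev.
rewrite -(act_hom _ _ gF) actF_V -scalemxAl scalerA mulVf ?scale1r //.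
by apply: fF_neq0; rewrite -ltnS.
Qed.

Lemma V_projective : Uprojective xi N VKA VKiA VEA VFA.
Proof.
move=> HV M M' hM hM' p [pK pKi pE pF] pfull g [gK gKi gE gF].
have [hK1 _] := hM (A ^+ N).
have [_ [hE1 _]] := hM 0.
have [_ [_ hF1]] := hM 0.
have [h [hh hp]] := lift_core HV (uax M) (uax M') (hK1 VK_pow) (hE1 VE_pow)
  (hF1 VF_pow) pK pKi pE pF pfull gK gKi gE gF.
by exists h; split.
Qed.

End Proj.

Lemma lamN i : lam i ^+ N = A ^+ N.
Proof.
rewrite -(pos_ord i) lam_pos exprMn exprVn -exprM mulnC exprM.
by rewrite (omN R n) expr1n invr1 mulr1.
Qed.

Lemma part_i : A ^+ N != Z ^+ N -> Usimple VKA VKiA VEA VFA.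
Proof.
move=> h; apply: simple_noE => i; apply: contra h.
rewrite /cE !mulf_eq0 (negbTE (@xi_neq0 R n)) (negbTE B0) orbF /= subr_eq0.
by move=> /eqP ->; rewrite lamN.
Qed.

Section Cases.
Variables (n0 : 'I_N).
Hypothesis hA : A = Z * om ^+ n0.

Lemma hlam_of t : lam (pos (n0 + t)) = mu t.
Proof.
rewrite lam_pos hA /mu exprD invfM mulrA mulfK //.
by rewrite expf_neq0 // (@om_neq0 R n).
Qed.

Lemma lam_n0 : lam n0 = Z.
Proof. by have := hlam_of 0; rewrite addn0 pos_ord /mu expr0 divr1. Qed.

Lemma hE_of i : cE i = 0 -> i = n0.
Proof.
rewrite /cE => /eqP; rewrite !mulf_eq0 (negbTE (@xi_neq0 R n)) (negbTE B0) orbF /=.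
by rewrite subr_eq0 => /eqP Zl; apply: lam_inj; rewrite -Zl lam_n0.
Qed.

Lemma hE0_of : cE n0 = 0.
Proof. by rewrite /cE lam_n0 subrr mul0r mulr0. Qed.

Lemma haZ_of : A ^+ N = Z ^+ N.
Proof. by rewrite hA exprMn -exprM mulnC exprM (omN R n) expr1n mulr1. Qed.

Variable k : nat.
Hypothesis hZ2 : Z ^+ 2 = om ^+ k.

Lemma ZlamF : Z * lam (pos (n0 + k)) = 1.
Proof.
rewrite hlam_of /mu mulrA -expr2 hZ2 mulfV //.
by rewrite expf_neq0 // (@om_neq0 R n).
Qed.

Lemma hF_of i : cF i = 0 -> i = pos (n0 + k).
Proof.
rewrite /cF => /eqP; rewrite mulf_eq0 invr_eq0 (negbTE B0) orbF subr_eq0 => /eqP h.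
apply: lam_inj; apply: (mulfI Z0); rewrite ZlamF.
by apply/eqP; rewrite -invr_eq1 invfM -h.
Qed.

Lemma hF0_of : cF (pos (n0 + k)) = 0.
Proof. by rewrite /cF -invfM ZlamF invr1 subrr mul0r. Qed.

Lemma part_ii : k = n -> Usimple VKA VKiA VEA VFA /\ Uprojective xi N VKA VKiA VEA VFA.
Proof.
move=> kn; move: hF_of hF0_of; rewrite kn => hF hF0.
split; first exact: simple_case hE_of hF.
exact: V_projective hE_of hE0_of hF hF0 hlam_of haZ_of.
Qed.

Lemma part_iii : (0 < k)%N -> (k < n)%N ->
  [/\ Ureducible VKA VKiA VEA VFA,
      Uindecomposable VKA VKiA VEA VFA,
      exists W : 'M[C]_N, Usimple_sub VKA VKiA VEA VFA W /\ \rank W = k.+1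
    & forall T : 'M[C]_N, Uendo VKA VKiA VEA VFA T -> exists c, T = c%:M].
Proof.
move=> k1 kn.
have hE := hE_of; have hE0 := hE0_of; have hF := hF_of; have hF0 := hF0_of.
split.
- exact: case3_reducible kn hE0 hF0.
- exact: case3_indec hE.
- exists (W0 n0 k); exact: case3_simple_sub kn hE hE0 hF hF0.
- move=> T; exact: case3_endo kn hE hF T.
Qed.

End Cases.
End VBasic.

Lemma psi_scalar (R : realType) (a b m : complex R) :
  m * m = 1 -> a = m -> psi a b m = m%:M.
Proof.
move=> mm am.
have m0 : m != 0 by apply: contra_eq_neq mm => ->; rewrite mul0r eq_sym oner_eq0.
have mi : m^-1 = m by apply: (mulIf m0); rewrite mulVf.
apply/matrixP => i j; rewrite !mxE.
case: i => [[|[|//]] ?]; case: j => [[|[|//]] ?] /=;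
  by rewrite ?am ?mi ?subrr ?mulr0 ?oppr0 ?mulr1n ?mulr0n ?addrK.
Qed.

Lemma main_part1 (R : realType) (n : nat) (hn : (0 < n)%N) (j : int) (A B : complex R) :
  let N := n.+1 in
  let xi := qxi R N in
  let Z := xi ^ j in
  let m := Z ^+ N in
  let a := A ^+ N in
  let b := B ^+ N in
  let K := VK N A in let Ki := VKi N A in
  let E := VE N A B Z in let F := VF N A B Z in
  a != 0 -> b != 0 ->
  (~ diagonalizable (psi a b m) -> Usimple K Ki E F) /\
  (psi a b m = m%:M -> (j = - 1 %[mod (N : int)])%Z ->
     Usimple K Ki E F /\ Uprojective xi N K Ki E F) /\
  (psi a b m = m%:M ->
   forall k : nat, (1 <= k <= N - 2)%N -> (j = k%:Z %[mod (N : int)])%Z ->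
     [/\ Ureducible K Ki E F,
         Uindecomposable K Ki E F,
         exists W : 'M[complex R]_N, Usimple_sub K Ki E F W /\ \rank W = k.+1
       & forall T : 'M[complex R]_N, Uendo K Ki E F T -> exists c, T = c%:M]).
Proof.
move=> N xi Z m a b K Ki E F a0 b0.
have A0 : A != 0 by move: a0; rewrite /a expf_eq0.
have B0 : B != 0 by move: b0; rewrite /b expf_eq0.
have xi0 : xi != 0 := xi_neq0 R n.
have Z0 : Z != 0 by rewrite expfz_neq0.
have omN := omN R n.
have om0 := om_neq0 R n.
have Z2 : Z ^+ 2 = om R n ^+ `|(j %% N)%Z|%N.
  by rewrite /Z /xi exprnP exprzAC -exprnP (expz_mod _ om0 omN).
have mm : m * m = 1.
  rewrite /m -exprD addnn -mul2n exprM Z2 -exprM mulnC exprM omN expr1n //.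
have n0P : A ^+ N = Z ^+ N -> exists n0 : 'I_N, A = Z * om R n ^+ n0.
  move=> aZ; have : (A / Z) ^+ N = 1 by rewrite expr_div_n aZ divff // expf_neq0.
  case/(prim_rootP (om_prim R n)) => n0 hn0; exists n0.
  by rewrite -hn0 mulrC divfK.
have amP : psi a b m = m%:M -> A ^+ N = Z ^+ N.
  by move/(congr1 (fun M : 'M_2 => M 0 0)); rewrite !mxE.
split; [|split].
- move=> nd; apply: part_i => //; apply/eqP => aZ; apply: nd.
  by rewrite psi_scalar //; exact: diagonalizable_scalar.
- move=> hpsi hj; have [n0 hA] := n0P (amP hpsi).
  apply: (part_ii A0 B0 Z0 hA Z2).
  rewrite hj.
  have -> : (-1 : int) = (-1) * (N : int) + (n : int).
    by rewrite mulN1r /N -addn1 PoszD opprD addrAC addNr add0r.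
  rewrite modzMDl modz_small //; apply/andP; split => //.
  by rewrite ltz_nat.
- move=> hpsi k /andP[k1 kN2] hj; have [n0 hA] := n0P (amP hpsi).
  have kn : (k < n)%N.
    by rewrite (leq_ltn_trans kN2) // /N subSS ltn_subrL hn.
  have ek : `|(j %% N)%Z|%N = k.
    rewrite hj modz_small //; apply/andP; split => //.
    by rewrite ltz_nat ltnS ltnW.
  rewrite ek in Z2.
  exact: (part_iii A0 B0 Z0 hA Z2 k1 kn).
Qed.

Theorem theorem3p9 (R : realType) (N : nat) (hN : (2 <= N)%N) :
  (* general statement: mu = j/2 with j : int, Z = omega^mu = xi^j,
     A = omega^alpha, B = omega^beta, chi = (A^N, B^N, m) *)
  (forall (j : int) (A B : complex R),
     let xi := qxi R N in
     let Z := xi ^ j in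
     let m := Z ^+ N in
     let a := A ^+ N in
     let b := B ^+ N in
     let K := VK N A in let Ki := VKi N A in
     let E := VE N A B Z in let F := VF N A B Z in
     a != 0 -> b != 0 ->
     \tr (psi a b m) = 2%:R * m ->
     (* (i) *)
     (~ diagonalizable (psi a b m) ->
        Usimple K Ki E F) /\
     (* (ii) *)
     (psi a b m = m%:M -> (j = - 1 %[mod (N : int)])%Z ->
        Usimple K Ki E F /\ Uprojective xi N K Ki E F) /\
     (* (iii) *)
     (psi a b m = m%:M ->
      forall k : nat, (1 <= k <= N - 2)%N -> (j = k%:Z %[mod (N : int)])%Z ->
        [/\ Ureducible K Ki E F,
            Uindecomposable K Ki E F,
            exists W : 'M[complex R]_N, Usimple_sub K Ki E F W /\ \rank W = k.+1
          & forall T : 'M[complex R]_N, Uendo K Ki E F T -> exists c, T = c%:M])) /\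
  (* the particular instance of (ii): a = m = -1, b = 1, mu = -1/2 *)
  (forall (A B : complex R), A ^+ N = -1 -> B ^+ N = 1 ->
     let xi := qxi R N in
     let Z := xi ^ (-1 : int) in
     Z ^+ N = -1 /\
     Usimple (VK N A) (VKi N A) (VE N A B Z) (VF N A B Z) /\
     Uprojective xi N (VK N A) (VKi N A) (VE N A B Z) (VF N A B Z)).
Proof.
case: N hN => [//|n] hN.
have hn : (0 < n)%N by [].
split.
  move=> j A B xi Z m a b K Ki E F a0 b0 _.
  exact (@main_part1 R n hn j A B a0 b0).
move=> A B hA hB xi Z.
have Zm : Z ^+ n.+1 = -1 by rewrite /Z /xi exprN1 exprVn xiN invrN1.
have a0 : A ^+ n.+1 != 0 by rewrite hA oppr_eq0 oner_eq0.
have b0 : B ^+ n.+1 != 0 by rewrite hB oner_eq0.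
have [_ [P2 _]] := @main_part1 R n hn (-1) A B a0 b0.
split => //; apply: P2 => //.
by apply: psi_scalar; rewrite ?hA Zm // mulrNN mulr1.
Qed.
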